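(* Let $\mathtt{r}:[\omega]^2\to\omega$ be a function (writing $\mathtt{r}(k,l)$ for $\mathtt{r}(\{k,l\})$ with $k<l$) such that for all $k<l<m$ in $\omega$: (i) $\mathtt{r}(k,m)\neq\mathtt{r}(l,m)$; (ii) $\mathtt{r}(k,l)\le\max\{\mathtt{r}(k,m),\mathtt{r}(l,m)\}$; (iii) $\mathtt{r}(k,m)\le\max\{\mathtt{r}(k,l),\mathtt{r}(l,m)\}$. Let $X$ be a topological space and $(x_n)_{n\in\omega}$ a sequence of pairwise distinct points of $X$ such that the subspace $\{x_n:n\in\omega\}$ is homeomorphic to $\mathbb{Q}$, and fix a metric $d$ on $\{x_n:n\in\omega\}$ compatible with its subspace topology. Call $A\subseteq\omega$ scattered if there is no $B\subseteq A$ with $\{x_n:n\in B\}$ homeomorphic to $\mathbb{Q}$; let $\mathcal{I}$ be the family of scattered subsets of $\omega$ and $\mathcal{I}^+=\mathcal{P}(\omega)\setminus\mathcal{I}$. For $i,j\in\omega$ let $A_{i,j}=\{n\in\omega: d(x_n,x_i)<\frac{1}{j+1}\}$. Then for every $A\in\mathcal{I}^+$ there exists a nonempty $B\subseteq A$ such that $B$ is $\mathtt{r}$-shift-increasing and for all $i\in B$ and $j\in\omega$ there is $n\in B\cap A_{i,j}$ with $n\neq i$.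
   Context: $[\omega]^2$ is the set of two-element subsets of $\omega$. A set $B\subseteq\omega$ is $\mathtt{r}$-shift-increasing if for all $k,l,m\in B$ with $k<l<m$, $\mathtt{r}(k,l)\le\mathtt{r}(l,m)$. $\mathbb{Q}$ carries its usual topology. *)

(* Defs.v *)
From HB Require Import structures.
From mathcomp Require Import all_boot all_order all_algebra.
From mathcomp Require Import all_classical all_reals topology normedtype.
Set Implicit Arguments. Unset Strict Implicit. Unset Printing Implicit Defensive.
Import Order.TTheory GRing.Theory Num.Theory.
Import numFieldNormedType.Exports.
Local Open Scope classical_set_scope.
Local Open Scope ring_scope.

Definition homeomorphic_sub (X Y : topologicalType) (S : set X) (T : set Y) : Prop :=
  exists (f : X -> Y) (g : Y -> X),
    [/\ set_fun S T f, set_fun T S g,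
        (forall p, S p -> g (f p) = p),
        (forall q, T q -> f (g q) = q) &
        ({within S, continuous f} /\ {within T, continuous g})].

Definition ratset (R : realType) : set R := [set t | exists q : rat, t = ratr q].

Definition homeo_Q (R : realType) (X : topologicalType) (S : set X) : Prop :=
  homeomorphic_sub S (@ratset R).

Definition is_metric_on (R : realType) (X : Type) (S : set X) (d : X -> X -> R) : Prop :=
  forall p q s, S p -> S q -> S s ->
    [/\ 0 <= d p q, (d p q = 0 <-> p = q), d p q = d q p &
        d p s <= d p q + d q s].

Definition metric_compatible (R : realType) (X : topologicalType) (S : set X)
    (d : X -> X -> R) : Prop :=
  forall p, S p -> forall U : set X,
    (@nbhs (subspace S) (subspace S) p U <->
     exists2 e : R, 0 < e & [set q | S q /\ d p q < e] `<=` U).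

(* r(k,l) for k<l is coded as r k l *)
Definition shift_increasing (r : nat -> nat -> nat) (B : set nat) : Prop :=
  forall k l m, B k -> B l -> B m -> (k < l < m)%N -> (r k l <= r l m)%N.

Definition scattered (R : realType) (X : topologicalType) (x : nat -> X) (A : set nat) : Prop :=
  ~ exists B : set nat, B `<=` A /\ homeo_Q R (x @` B).

Definition Aij (R : realType) (X : Type) (x : nat -> X) (d : X -> X -> R) (i j : nat) : set nat :=
  [set n | d (x n) (x i) < (j.+1%:R)^-1].

(* Main.v *)
Require Import Defs.
From HB Require Import structures.
From mathcomp Require Import all_boot all_order all_algebra.
From mathcomp Require Import all_classical all_reals topology normedtype.
Import Order.TTheory GRing.Theory Num.Theory.
Import numFieldNormedType.Exports.
Local Open Scope classical_set_scope.
Local Open Scope ring_scope.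

Definition infinite_n (L : set nat) := forall N, exists l, L l /\ (N <= l)%N.

Section Main.
Variable r : nat -> nat -> nat.
Hypothesis hi : forall k l m, (k < l < m)%N -> r k m <> r l m.
Hypothesis hii : forall k l m, (k < l < m)%N -> (r k l <= maxn (r k m) (r l m))%N.
Hypothesis hiii : forall k l m, (k < l < m)%N -> (r k m <= maxn (r k l) (r l m))%N.
Variable R : realType.
Variable D : nat -> nat -> R.
Hypothesis Dpos : forall n m, n <> m -> 0 < D n m.
Hypothesis D0 : forall n, D n n = 0.
Hypothesis Dsym : forall n m, D n m = D m n.
Hypothesis Dtri : forall a b c, D a c <= D a b + D b c.

Local Open Scope nat_scope.
Definition kr a l q : bool := (a < l < q)%N && (r l q < r a l)%N.
Definition KS (F : seq nat) l q : bool := has (fun a => kr a l q) F.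

Lemma kr_eq a l q : kr a l q -> r a q = r a l.
Proof.
case/andP=> alq lt.
have h2 := hii a l q alq; have h3 := hiii a l q alq.
have h2' : (r a l <= r a q)%N.
  move: h2; rewrite leq_max => /orP[//|] h; by move: (leq_ltn_trans h lt); rewrite ltnn.
apply/eqP; rewrite eqn_leq h2' andbT.
rewrite (leq_trans h3) // geq_max leqnn /=; exact: ltnW.
Qed.

Lemma extract (f : nat -> nat) L : infinite_n L ->
  (exists w, infinite_n (L `&` [set l | f l = w])) \/
  (exists L', L' `<=` L /\ infinite_n L' /\
     forall l l', L' l -> L' l' -> f l = f l' -> l = l').
Proof.
move=> infL.
case: (pselect (exists w, infinite_n (L `&` [set l | f l = w]))) => [h|h]; [by left|right].
have fin : forall w, exists b, forall l, L l -> f l = w -> (l < b)%N.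
  move=> w; apply: contrapT => nb; apply: h; exists w => N.
  apply: contrapT => nN; apply: nb; exists N => l Ll flw.
  by rewrite ltnNge; apply/negP => Nl; apply: nN; exists l.
have [bnd hb] := choice fin.
exists [set l | L l /\ forall l', L l' -> (l' < l)%N -> f l' <> f l].
split; first by move=> l [].
split; last first.
  move=> l l' [Ll hl] [Ll' hl'] e.
  case: (ltngtP l l') => // c; [by have := hl' _ Ll c; rewrite e|by have := hl _ Ll' c; rewrite e].
move=> N.
pose M := (\max_(i < N) bnd (f i))%N.
have [l [Ll lb]] := infL (maxn N M).
have Pex : exists l', L l' /\ f l' = f l by exists l.
pose P := fun l' => `[< L l' /\ f l' = f l >].
have PP : exists l', P l' by exists l; apply/asboolP.
case: (ex_minnP PP) => m /asboolP [Lm fm] mmin.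
exists m; split.
  split => // l' Ll' lt e; have : (m <= l')%N by apply: mmin; apply/asboolP; rewrite e.
  by rewrite leqNgt lt.
rewrite leqNgt; apply/negP => mN.
have : (l < bnd (f m))%N by apply: hb.
rewrite ltnNge => /negP; apply.
apply: leq_trans (leq_trans (leq_maxr N M) lb).
rewrite fm.
by have := @leq_bigmax_cond _ (fun=> true) (fun i : 'I_N => bnd (f i)) (Ordinal mN) isT; rewrite /= fm.
Qed.


Lemma size_sub_iota (s : seq nat) w : uniq s -> (forall v, v \in s -> (v < w)%N) ->
  (size s <= w)%N.
Proof.
move=> us hs; rewrite -(size_iota 0 w); apply: uniq_leq_size => // v /hs.
by rewrite mem_iota add0n.
Qed.

Lemma bound_a a L : infinite_n L -> exists L', L' `<=` L /\ infinite_n L' /\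
  exists W, forall q s, uniq s -> (forall l, l \in s -> L' l) ->
    (count (fun l => kr a l q) s <= W)%N.
Proof.
move=> infL; case: (extract (r a) L infL) => [[w hw]|[L' [sub [inf' inj]]]].
  exists (L `&` [set l | r a l = w]); split; first by move=> ? [].
  split => //; exists w => q s us hs.
  rewrite -size_filter.
  rewrite -(size_map (fun l => r l q)); apply: size_sub_iota.
    rewrite map_inj_in_uniq ?filter_uniq // => l l'.
    rewrite !mem_filter => /andP[/andP[/andP[_ lq] _] _] /andP[/andP[/andP[_ l'q] _] _] e.
    case: (ltngtP l l') => // c.
      by have := hi l l' q; rewrite c l'q => /(_ isT); rewrite e.
    by have := hi l' l q; rewrite c lq => /(_ isT); rewrite e.
  move=> v /mapP[l]; rewrite mem_filter => /andP[/andP[_ lt] ls] ->.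
  by have [_ /= <-] := hs _ ls.
exists L'; split => //; split => //; exists 1%N => q s us hs.
rewrite -size_filter -(size_map (r a)).
have -> : (1 = size [:: r a q])%N by [].
apply: uniq_leq_size.
  rewrite map_inj_in_uniq ?filter_uniq // => l l'.
  rewrite !mem_filter => /andP[_ ls] /andP[_ l's]; exact: inj (hs _ ls) (hs _ l's).
move=> v /mapP[l]; rewrite mem_filter => /andP[k _] ->.
by rewrite inE (kr_eq a l q k).
Qed.

Lemma bound_F F L : infinite_n L -> exists L', L' `<=` L /\ infinite_n L' /\
  exists W, forall q s, uniq s -> (forall l, l \in s -> L' l) ->
    (count (fun l => KS F l q) s <= W)%N.
Proof.
elim: F L => [|a F IH] L infL.
  exists L; split => //; split => //; exists 0%N => q s _ _.
  by rewrite /KS /= count_pred0.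
have [L1 [s1 [i1 [Wa hWa]]]] := bound_a a L infL.
have [L2 [s2 [i2 [WF hWF]]]] := IH L1 i1.
exists L2; split; first by move=> l /s2 /s1.
split => //; exists (Wa + WF)%N => q s us hs.
have e : count (fun l => KS (a :: F) l q) s = count (predU (fun l => kr a l q) (fun l => KS F l q)) s.
  by apply: eq_count => l.
rewrite e; apply: leq_trans (leq_addr (count (predI (fun l => kr a l q) (fun l => KS F l q)) s) _) _.
rewrite count_predUI; apply: leq_add.
  by apply: hWa => // l /hs /s2.
exact: hWF.
Qed.

Lemma sumn_ge (s : seq nat) x : x \in s -> (x <= sumn s)%N.
Proof.
elim: s => [//|y s IH]; rewrite inE /= => /orP[/eqP->|/IH h]; first exact: leq_addr.
exact: leq_trans h (leq_addl _ _).
Qed.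

Lemma infinite_seq L n : infinite_n L -> exists s, [/\ uniq s, size s = n &
  forall l, l \in s -> L l].
Proof.
move=> infL; elim: n => [|n [s [us ss hs]]]; first by exists [::].
have [l [Ll ll]] := infL (sumn s).+1.
exists (l :: s); split => //=; last by move=> l'; rewrite inE => /orP[/eqP->|/hs].
  rewrite us andbT; apply/negP => /sumn_ge h.
  by move: (leq_trans ll h); rewrite ltnn.
by rewrite ss.
Qed.

Lemma noICK F L : infinite_n L ->
  ~ (forall s, uniq s -> (forall l, l \in s -> L l) ->
        exists q, forall l, l \in s -> KS F l q).
Proof.
move=> infL h.
have [L' [sub [inf' [W hW]]]] := bound_F F L infL.
have [s [us ss hs]] := infinite_seq L' W.+1 inf'.
have [q hq] := h s us (fun l ls => sub _ (hs l ls)).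
have := hW q s us hs.
rewrite (@eq_in_count _ _ predT); last by move=> l ls; rewrite hq.
by rewrite count_predT ss ltnn.
Qed.

Local Close Scope nat_scope.
Definition ballD t e := [set n | D n t < e].
Definition crowded (Q : set nat) := forall s, Q s -> forall e, 0 < e ->
  exists n, [/\ Q n, n <> s & D n s < e].
Definition pos (S : set nat) := exists Q, [/\ Q `<=` S, (exists s, Q s) & crowded Q].
Definition rich t S := forall e, 0 < e -> pos (S `&` ballD t e).

Lemma pos_sub S T : S `<=` T -> pos S -> pos T.
Proof. by move=> ST [Q [QS ne cr]]; exists Q; split => // ? /QS /ST. Qed.

Lemma pos_ne S : pos S -> exists q, S q.
Proof. by case=> Q [QS [s Qs] _]; exists s; apply: QS. Qed.

Lemma crowded_ball Q s e : crowded Q -> crowded (Q `&` ballD s e).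
Proof.
move=> cr n [Qn dn] eps eps0.
have h0 : 0 < Num.min eps (e - D n s) by rewrite lt_min eps0 subr_gt0 dn.
have [m [Qm mn dm]] := cr n Qn _ h0.
exists m; split => //; last by move: dm; rewrite lt_min => /andP[].
split => //; rewrite /ballD /=.
move: dm; rewrite lt_min => /andP[_ dm].
by apply: le_lt_trans (Dtri m n s) _; rewrite -ltrBrDr.
Qed.

Lemma pos_ball Q s e : crowded Q -> Q s -> 0 < e -> pos (Q `&` ballD s e).
Proof.
move=> cr Qs e0; exists (Q `&` ballD s e); split => //; last exact: crowded_ball.
by exists s; split => //; rewrite /ballD /= D0.
Qed.

Lemma rich_crowded Q s : crowded Q -> Q s -> rich s Q.
Proof. by move=> cr Qs e e0; apply: pos_ball. Qed.

Lemma pos_union S1 S2 : pos (S1 `|` S2) -> pos S1 \/ pos S2.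
Proof.
case=> Q [QS [s0 Qs0] cr].
case: (pselect (exists s d, [/\ Q s, 0 < d & forall n, Q n -> D n s < d -> ~ S1 n])).
  move=> [s [d [Qs d0 hn]]]; right.
  exists (Q `&` ballD s d); split; last exact: crowded_ball.
    by move=> n [Qn dn]; case: (QS n Qn) => // /(hn n Qn dn).
  by exists s; split => //; rewrite /ballD /= D0.
move=> hno; left.
have dens : forall s d, Q s -> 0 < d -> exists n, [/\ Q n, D n s < d & S1 n].
  move=> s d Qs d0; apply: contrapT => hh; apply: hno; exists s, d; split => // n Qn dn S1n.
  by apply: hh; exists n.
exists (Q `&` S1); split => //.
  by have [n [Qn _ S1n]] := dens s0 1 Qs0 ltr01; exists n.
move=> n [Qn S1n] eps eps0.
have e2 : 0 < eps / 2 by rewrite divr_gt0.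
have [m [Qm mn dm]] := cr n Qn _ e2.
have dmn0 : 0 < D m n by apply: Dpos.
have h0 : 0 < Num.min (eps / 2) (D m n) by rewrite lt_min e2 dmn0.
have [p [Qp dp S1p]] := dens m _ Qm h0.
move: dp; rewrite lt_min => /andP[dp1 dp2].
exists p; split => //.
  move=> pn; subst p; move: dp2; rewrite Dsym ltxx //.
apply: le_lt_trans (Dtri p m n) _.
by rewrite [eps]splitr; apply: ltrD.
Qed.

Lemma minpos N s : exists eps, 0 < eps /\ forall n, (n < N)%N -> n <> s -> eps <= D n s.
Proof.
elim: N => [|N [eps [e0 he]]]; first by exists 1; split => // n.
case: (eqVneq N s) => [Ns|Ns].
  exists eps; split => // n; rewrite ltnS leq_eqVlt => /orP[/eqP->|/he//].
  by rewrite Ns.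
exists (Num.min eps (D N s)); split; first by rewrite lt_min e0 Dpos //; apply/eqP.
move=> n; rewrite ltnS leq_eqVlt => /orP[/eqP->|nN ns]; first by rewrite ge_min lexx orbT.
by rewrite ge_min he.
Qed.

Lemma notpos_fin N : ~ pos [set n | (n < N)%N].
Proof.
case=> Q [QS [s Qs] cr].
have [eps [e0 he]] := minpos N s.
have [n [Qn ns dn]] := cr s Qs _ e0.
by move: (he n (QS _ Qn) ns); rewrite leNgt dn.
Qed.

Lemma pos_minus_fin S N : pos S -> pos (S `\` [set n | (n < N)%N]).
Proof.
move=> pS.
have : pos ((S `\` [set n | (n < N)%N]) `|` [set n | (n < N)%N]).
  by apply: pos_sub pS => n Sn; case: (pselect (n < N)%N) => h; [right|left].
by case/pos_union => // /notpos_fin.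
Qed.

Lemma rich_sub t S T : S `<=` T -> rich t S -> rich t T.
Proof. by move=> ST h e e0; apply: pos_sub (h e e0) => n [/ST ? ?]. Qed.

Lemma rich_minus_fin t S N : rich t S -> rich t (S `\` [set n | (n < N)%N]).
Proof.
move=> h e e0; have := pos_minus_fin _ N (h e e0).
by apply: pos_sub => n [[? ?] ?].
Qed.

Lemma rich_union t S1 S2 : rich t (S1 `|` S2) -> rich t S1 \/ rich t S2.
Proof.
move=> h; case: (pselect (rich t S1)) => h1; [by left|right].
have [e1 [e10 ne1]] : exists e1, 0 < e1 /\ ~ pos (S1 `&` ballD t e1).
  apply: contrapT => hh; apply: h1 => e e0; apply: contrapT => ne; apply: hh.
  by exists e.
move=> e e0.
have m0 : 0 < Num.min e e1 by rewrite lt_min e0.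
have := h _ m0.
have sub : (S1 `|` S2) `&` ballD t (Num.min e e1) `<=`
   (S1 `&` ballD t e1) `|` (S2 `&` ballD t e).
  move=> n [[S1n|S2n] dn]; move: dn; rewrite /ballD /= lt_min => /andP[d1 d2];
  by [left|right].
move/(pos_sub _ _ sub)/pos_union => [//|//].
Qed.

Lemma rich_ne t S : rich t S -> exists q, S q.
Proof. by move=> /(_ 1 ltr01)/pos_ne [q [Sq _]]; exists q. Qed.

Lemma rich_inter t S (K : nat -> set nat) (s : seq nat) :
  rich t S -> (forall l, l \in s -> ~ rich t (S `\` K l)) ->
  rich t (S `&` [set q | forall l, l \in s -> K l q]).
Proof.
move=> rS; elim: s => [|l s IH] h.
  by apply: rich_sub rS => q Sq; split => // l.
have IH' : rich t (S `&` [set q | forall l, l \in s -> K l q]) by apply: IH => l' l's; apply: h; rewrite inE l's orbT.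
have : rich t ((S `&` [set q | forall l', l' \in l :: s -> K l' q]) `|` (S `\` K l)).
  apply: rich_sub IH' => q [Sq hq].
  case: (pselect (K l q)) => Kq; [left|right] => //; split => // l'.
  by rewrite inE => /orP[/eqP->//|/hq].
case/rich_union => // /(h l); rewrite mem_head => /(_ isT) [].
Qed.

Let KSs (F : seq nat) (l : nat) := [set q | KS F l q].

Lemma killers1 F S t : rich t S -> exists N, forall l, (N <= l)%N -> rich t (S `\` KSs F l).
Proof.
move=> rS; apply: contrapT => hno.
have infL : infinite_n [set l | ~ rich t (S `\` KSs F l)].
  move=> N; apply: contrapT => hh; apply: hno; exists N => l Nl.
  by apply: contrapT => nr; apply: hh; exists l.
apply: (noICK F _ infL) => s us hs.
have := rich_inter _ _ (KSs F) _ rS hs.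
by case/rich_ne => q [_ hq]; exists q.
Qed.

Lemma killers F S (T : seq nat) : (forall t, t \in T -> rich t S) ->
  exists N, forall l, (N <= l)%N -> forall t, t \in T -> rich t (S `\` KSs F l).
Proof.
elim: T => [|t T IH] h; first by exists 0%N.
have [N1 h1] := killers1 F _ _ (h t (mem_head _ _)).
have [N2 h2] := IH (fun t' t'T => h t' (@mem_behead _ (t :: T) _ t'T)).
exists (maxn N1 N2) => l; rewrite geq_max => /andP[l1 l2] t'.
by rewrite inE => /orP[/eqP->|]; [apply: h1|apply: h2].
Qed.

Lemma selfkill F S Q : Q `<=` S -> (exists s, Q s) -> crowded Q ->
  exists l, Q l /\ rich l (S `\` KSs F l).
Proof.
move=> QS neQ crQ; apply: contrapT => hno.
have hstep : forall Z : set nat, exists p : nat * set nat,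
    [/\ Z `<=` Q, (exists s, Z s) & crowded Z] ->
    [/\ Z p.1, p.2 `<=` Z `&` KSs F p.1, (exists s, p.2 s) & crowded p.2].
  move=> Z; case: (pselect [/\ Z `<=` Q, (exists s, Z s) & crowded Z]);
    last by move=> nh; exists (0%N, set0) => /nh.
  move=> [ZQ [l Zl] crZ].
  have nr : ~ rich l (S `\` KSs F l) by move=> hr; apply: hno; exists l; split => //; apply: ZQ.
  have [e [e0 ne]] : exists e, 0 < e /\ ~ pos ((S `\` KSs F l) `&` ballD l e).
    apply: contrapT => hh; apply: nr => e e0; apply: contrapT => hp; apply: hh; by exists e.
  have pZ := pos_ball _ _ _ crZ Zl e0.
  have sub : Z `&` ballD l e `<=` (Z `&` KSs F l) `|` ((S `\` KSs F l) `&` ballD l e).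
    move=> q [Zq dq]; case: (pselect (KSs F l q)) => k; [left|right] => //.
    by split => //; split => //; apply: QS; apply: ZQ.
  case: (pos_union _ _ (pos_sub _ _ sub pZ)) => // [[Z' [Z'sub neZ' crZ']]].
  by exists (l, Z') => _.
have [nxt hnxt] := choice hstep.
pose Zs := fix Zs k := if k is S k' then (nxt (Zs k')).2 else Q.
pose ls k := (nxt (Zs k)).1.
have inv : forall k, [/\ Zs k `<=` Q, (exists s, Zs k s) & crowded (Zs k)].
  elim=> [|k [IH1 IH2 IH3]]; first by split => //.
  have [_ h2 h3 h4] := hnxt _ (And3 IH1 IH2 IH3).
  split => //=; by move=> q /h2 [/IH1].
have dec : forall k m, (k <= m)%N -> Zs m `<=` Zs k.
  move=> k m /subnKC <-; elim: (m - k)%N => [|j IH]; first by rewrite addn0.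
  rewrite addnS => q /= hq; apply: IH.
  by have [_ h2 _ _] := hnxt _ (inv (k + j)%N); case: (h2 _ hq).
have lin : forall k, Zs k (ls k) by move=> k; have [] := hnxt _ (inv k).
have kil : forall k m, (k < m)%N -> KS F (ls k) (ls m).
  move=> k m km; have := dec _ _ km _ (lin m).
  by have [_ h2 _ _] := hnxt _ (inv k); move=> /h2 [].
have incr : forall k m, (k < m)%N -> (ls k < ls m)%N.
  by move=> k m /kil /hasP [a _] /andP[/andP[_ lq] _].
have lge : forall k, (k <= ls k)%N.
  elim=> [//|k IH]; exact: leq_ltn_trans IH (incr _ _ (ltnSn k)).
have infL : infinite_n (range ls) by move=> N; exists (ls N); split; [exists N|exact: lge].
apply: (noICK F _ infL) => s us hs.
exists (ls (sumn s).+1%N) => l ls_in.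
have [k _ e] := hs l ls_in; rewrite -e in ls_in *.
apply: kil; rewrite ltnS; apply: leq_trans (lge k) _.
exact: sumn_ge.
Qed.

Definition Inv (A : set nat) (F : seq nat) (S : set nat) :=
 [/\ forall t, t \in F -> rich t S,
     forall q a, S q -> a \in F -> (a < q)%N,
     forall q a l, S q -> a \in F -> l \in F -> (a < l)%N -> (r a l <= r l q)%N,
     forall a l m, a \in F -> l \in F -> m \in F -> (a < l < m)%N -> (r a l <= r l m)%N &
     (S `<=` A /\ forall t, t \in F -> A t)].

Lemma mem_rcons_lt (F : seq nat) l x : x \in rcons F l -> (x < l)%N -> x \in F.
Proof.
by rewrite mem_rcons inE => /orP[/eqP->|//]; rewrite ltnn.
Qed.

Lemma step A F S t e : Inv A F S -> t \in F -> 0 < e ->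
  exists l S', [/\ Inv A (rcons F l) S', S l, l <> t & D l t < e].
Proof.
move=> [rS Slt Str Fg [SA FA]] tF e0.
have [N hN] := killers F S F rS.
have pS := rS t tF e e0.
have [Q [QS neQ crQ]] := pos_minus_fin _ (maxn N t.+1) pS.
have QS' : Q `<=` S by move=> q /QS [[]].
have [l [Ql rl]] := selfkill F S Q QS' neQ crQ.
have [[Sl dl] nl] := QS _ Ql.
have nl' : (maxn N t.+1 <= l)%N by rewrite leqNgt; apply/negP.
move: nl'; rewrite geq_max => /andP[Nl tl].
exists l, ((S `\` KSs F l) `\` [set n | (n < l.+1)%N]); split => //; last first.
  by move=> lt; move: tl; rewrite lt ltnn.
split.
- move=> t'; rewrite mem_rcons inE => /orP[/eqP->|t'F]; apply: rich_minus_fin => //.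
  exact: hN.
- move=> q a [[Sq _] ql] aF.
  have lq : (l < q)%N by rewrite ltnNge; apply/negP => h; apply: ql; rewrite /= ltnS.
  move: aF; rewrite mem_rcons inE => /orP[/eqP->//|aF]; exact: Slt.
- move=> q a l' [[Sq nK] ql] aF l'F al'.
  have lq : (l < q)%N by rewrite ltnNge; apply/negP => h; apply: ql; rewrite /= ltnS.
  move: l'F; rewrite mem_rcons inE => /orP[/eqP El'|l'F].
    subst l'.
    have aF' : a \in F := mem_rcons_lt _ _ _ aF al'.
    rewrite leqNgt; apply/negP => lt; apply: nK; apply/hasP; exists a => //.
    by rewrite /kr al' lq lt.
  move: aF; rewrite mem_rcons inE => /orP[/eqP Ea|aF]; last exact: Str.
  by subst a; move: (Slt _ _ Sl l'F) (al') => h1 h2; move: (ltn_trans h1 h2); rewrite ltnn.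
- move=> a l' m aF l'F mF /andP[al' l'm].
  move: (mF); rewrite mem_rcons inE => /orP[/eqP Em|mF'].
    subst m.
    have aF' := mem_rcons_lt _ _ _ aF (ltn_trans al' l'm).
    have l'F' := mem_rcons_lt _ _ _ l'F l'm.
    exact: Str Sl aF' l'F' al'.
  have ml := Slt _ _ Sl mF'.
  have aF' := mem_rcons_lt _ _ _ aF (ltn_trans (ltn_trans al' l'm) ml).
  have l'F' := mem_rcons_lt _ _ _ l'F (ltn_trans l'm ml).
  by apply: Fg => //; rewrite al' l'm.
- split; first by move=> q [[/SA]].
  by move=> t'; rewrite mem_rcons inE => /orP[/eqP->|/FA//]; apply: SA.
Qed.

Local Open Scope nat_scope.
Lemma logn_le k : (logn 2 k.+1 <= k)%N.
Proof.
have h1 : (2 ^ logn 2 k.+1 <= k.+1)%N by apply: dvdn_leq => //; apply: pfactor_dvdnn.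
by rewrite -ltnS; apply: leq_trans (ltn_expl _ (isT : (1 < 2)%N)) h1.
Qed.

Lemma logn_hit p j : exists k, (j <= k)%N /\ logn 2 k.+1 = p.
Proof.
have pos : (0 < (j.*2.+1) * 2 ^ p)%N by rewrite muln_gt0 expn_gt0.
exists ((j.*2.+1) * 2 ^ p).-1; rewrite prednK //; split.
  rewrite -ltnS prednK // (leq_trans _ (leq_pmulr _ (expn_gt0 2 p))) //.
  by rewrite ltnS -addnn leq_addr.
by rewrite logn_Gauss ?pfactorK // coprime2n /= odd_double.
Qed.

Lemma construct A Q0 : Q0 `<=` A -> (exists s, Q0 s) -> crowded Q0 ->
  exists B : set nat, [/\ (exists i, B i), B `<=` A,
    (forall a l m, B a -> B l -> B m -> (a < l < m)%N -> (r a l <= r l m)%N) &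
    forall i j, B i -> exists n, [/\ B n, (D n i < (j.+1%:R)^-1)%R & n <> i]].
Proof.
move=> Q0A [l0 Ql0] crQ.
pose S0 := Q0 `\` [set n | (n < l0.+1)%N].
have inv0 : Inv A [:: l0] S0.
  split.
  - move=> t; rewrite inE => /eqP->; apply: rich_minus_fin; exact: rich_crowded.
  - move=> q a [_ ql] ; rewrite inE => /eqP->; rewrite ltnNge; apply/negP => h; apply: ql.
    by rewrite /= ltnS.
  - by move=> q a l _; rewrite !inE => /eqP-> /eqP->; rewrite ltnn.
  - by move=> a l m; rewrite !inE => /eqP-> /eqP-> _; rewrite ltnn.
  - split; first by move=> q [/Q0A].
    by move=> t; rewrite inE => /eqP->; apply: Q0A.
pose tg (k : nat) (F : seq nat) := nth 0%N F (logn 2 k.+1).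
have hst : forall ks : nat * (seq nat * set nat), exists st' : seq nat * set nat,
    (Inv A ks.2.1 ks.2.2 /\ size ks.2.1 = (ks.1).+1) ->
    exists l, [/\ st'.1 = rcons ks.2.1 l, Inv A st'.1 st'.2, l <> tg ks.1 ks.2.1 &
                  (D l (tg ks.1 ks.2.1) < ((ks.1).+1%:R)^-1)%R].
  move=> [k [F S]] /=.
  case: (pselect (Inv A F S /\ size F = k.+1)); last first.
    by move=> nh; exists ([::], set0) => /nh.
  move=> [iv sz].
  have tF : tg k F \in F by apply: mem_nth; rewrite sz ltnS logn_le.
  have e0 : (0 < (k.+1%:R : R)^-1)%R by rewrite invr_gt0 ltr0n.
  have [l [S' [iv' _ lt dl]]] := step _ _ _ _ _ iv tF e0.
  by exists (rcons F l, S') => _; exists l.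
have [nxt hnxt] := choice hst.
pose sts := fix sts k := if k is S k' then nxt (k', sts k') else ([:: l0], S0).
have inv : forall k, Inv A (sts k).1 (sts k).2 /\ size (sts k).1 = k.+1.
  elim=> [|k [IH1 IH2]]; first by split.
  have [l [e1 iv _ _]] := hnxt (k, sts k) (conj IH1 IH2).
  by split => //=; rewrite e1 size_rcons IH2.
pose pts k := nth 0%N (sts k).1 k.
have stepk : forall k, exists l, [/\ (sts k.+1).1 = rcons (sts k).1 l,
     l <> tg k (sts k).1 & (D l (tg k (sts k).1) < (k.+1%:R)^-1)%R].
  move=> k; have [l [e1 _ h1 h2]] := hnxt (k, sts k) (inv k).
  by exists l.
have prefix : forall k i, (i <= k)%N -> nth 0%N (sts k).1 i = pts i.
  move=> k i; elim: k => [|k IH] ik.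
    by move: ik; rewrite leqn0 => /eqP->.
  move: ik; rewrite leq_eqVlt => /orP[/eqP->//|ik].
  have [l [e1 _ _]] := stepk k.
  by rewrite e1 nth_rcons (proj2 (inv k)) ik IH.
have memF : forall k i, (i <= k)%N -> pts i \in (sts k).1.
  by move=> k i ik; rewrite -(prefix k i ik); apply: mem_nth; rewrite (proj2 (inv k)) ltnS.
exists (range pts); split.
- by exists (pts 0%N), 0%N.
- move=> n [k _ <-]; have [[_ _ _ _ [_ FA]] _] := inv k; apply: FA.
  exact: memF.
- move=> a l m [i _ <-] [j _ <-] [h _ <-] alm.
  pose K := maxn i (maxn j h).
  have [[_ _ _ Fg _] _] := inv K.
  apply: Fg => //; apply: memF; rewrite /K ?leq_maxl //.
    by rewrite (leq_trans (leq_maxl j h)) // leq_maxr.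
  by rewrite (leq_trans (leq_maxr j h)) // leq_maxr.
- move=> i j [p _ <-].
  have [k [jk lk]] := logn_hit p j.
  have [l [e1 ln dl]] := stepk k.
  have tgE : tg k (sts k).1 = pts p by rewrite /tg lk prefix // -lk logn_le.
  have ptsE : pts k.+1 = l by rewrite /pts e1 nth_rcons (proj2 (inv k)) ltnn eqxx.
  exists (pts k.+1); split; first by exists k.+1.
    rewrite ptsE -tgE; apply: lt_le_trans dl _.
    by rewrite lef_pV2 ?posrE ?ltr0n // ler_nat ltnS.
  by rewrite ptsE -tgE.
Qed.
End Main.

Lemma partA (R : realType) (X : topologicalType) (x : nat -> X)
  (d : X -> X -> R) (dmet : is_metric_on (range x) d)
  (dcomp : metric_compatible (range x) d) (B0 : set nat)
  (hB : homeo_Q R (x @` B0)) :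
  (exists i, B0 i) /\
  (forall i, B0 i -> forall e : R, 0 < e -> exists n, [/\ B0 n, n <> i & d (x n) (x i) < e]).
Proof.
case: hB => f [g [fS gT gf fg [cf cg]]].
split.
  have T0 : @ratset R (ratr 0) by exists 0.
  by have [i Bi _] := gT _ T0; exists i.
move=> i Bi e e0; apply: contrapT => hno.
have rxi : range x (x i) by exists i.
have hU : nbhs (x i : subspace (range x)) [set q | range x q /\ d (x i) q < e].
  by apply/(dcomp _ rxi); exists e.
move: hU; rewrite /nbhs /= -nbhs_subspace_in // => hU.
have Sxi : (x @` B0) (x i) by exists i.
have Tt : @ratset R (f (x i)) := fS _ Sxi.
move/subspace_continuousP: cg => /(_ _ Tt).
move=> hc. Set Printing All. idtac. Unset Printing All. have gfx : g (f (x i)) = x i by apply: gf. move: hc; rewrite /from_subspace gfx => hc. have := hc _ hU.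
rewrite /= nbhs_simpl /= => /nbhs_ballP [del del0 hdel].
case: Tt => q0 q0E.
have /rat_in_itvoo[q /itvP qre] : f (x i) < f (x i) + del by rewrite ltrDl.
have Tq : @ratset R (ratr q) by exists q.
have bq : ball (f (x i)) del (ratr q).
  rewrite /ball /= distrC ltr_distl qre andbT.
  by rewrite (@le_lt_trans _ _ (f (x i)))// ?qre// lerBlDl lerDr ltW.
have := hdel _ bq Tq.
have [n Bn gn] := gT _ Tq.
move=> /(_ (ex_intro2 _ _ n I gn)) [_ dlt].
apply: hno; exists n; split => //.
  move=> ni; subst n.
  have : f (g (ratr q)) = ratr q by apply: fg.
  have lt1 : f (x i) < ratr q by rewrite qre.
  by rewrite -gn => hh; move: lt1; rewrite hh ltxx.
have rxn : range x (x n) by exists n.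
have [_ _ -> _] := dmet _ _ _ rxn rxi rxi.
by rewrite gn.
Qed.

Theorem mainTheorem2 (R : realType) (r : nat -> nat -> nat)
  (hi : forall k l m, (k < l < m)%N -> r k m <> r l m)
  (hii : forall k l m, (k < l < m)%N -> (r k l <= maxn (r k m) (r l m))%N)
  (hiii : forall k l m, (k < l < m)%N -> (r k m <= maxn (r k l) (r l m))%N)
  (X : topologicalType) (x : nat -> X) (xinj : injective x)
  (hQ : homeo_Q R (range x))
  (d : X -> X -> R) (dmet : is_metric_on (range x) d)
  (dcomp : metric_compatible (range x) d)
  (A : set nat) (hA : ~ scattered R x A) :
  exists B : set nat,
    [/\ B !=set0, B `<=` A, shift_increasing r B &
        forall i j, B i -> exists n, [/\ B n, Aij x d i j n & n <> i]].
Proof.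
have [B0 [B0A hB]] : exists B, B `<=` A /\ homeo_Q R (x @` B).
  by apply: contrapT => hh; apply: hA => -[B [h1 h2]]; apply: hh; exists B.
have [[s0 Bs0] crB] := partA R X x d dmet dcomp B0 hB.
pose D n m := d (x n) (x m).
have rx : forall n, range x (x n) by move=> n; exists n.
have Dpos : forall n m, n <> m -> 0 < D n m.
  move=> n m nm; have [h0 [h1 _] _ _] := dmet _ _ _ (rx n) (rx m) (rx m).
  rewrite lt_neqAle h0 andbT eq_sym; apply/eqP => /h1 /xinj; exact: nm.
have D0 : forall n, D n n = 0.
  by move=> n; have [_ [_ h2] _ _] := dmet _ _ _ (rx n) (rx n) (rx n); apply: h2.
have Dsym : forall n m, D n m = D m n.
  by move=> n m; have [_ _ h _] := dmet _ _ _ (rx n) (rx m) (rx m).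
have Dtri : forall a b c, D a c <= D a b + D b c.
  by move=> a b c; have [_ _ _ h] := dmet _ _ _ (rx a) (rx b) (rx c).
have crQ : crowded R D B0.
  move=> s Bs e e0; have [n [Bn ns dn]] := crB s Bs e e0; by exists n.
have [B [[i Bi] BA good dens]] :=
  construct r hi hii hiii R D Dpos D0 Dsym Dtri A B0 B0A (ex_intro _ s0 Bs0) crQ.
exists B; split.
- by exists i.
- exact: BA.
- by move=> k l m Bk Bl Bm klm; apply: good.
- move=> i' j Bi'; have [n [Bn dn ni]] := dens i' j Bi'.
  by exists n; split.
Qed.
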